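(* Let $s,t\ge1$ and $k=s+t+4\le n$. Let $Q(s,t)$ be the graph on $k$ vertices consisting of a $4$-cycle $v_1v_2v_3v_4v_1$ with $s$ pendant vertices attached to $v_1$ and $t$ pendant vertices attached to $v_2$, and let $Q_1$ be the graph on $k$ vertices consisting of a $4$-cycle $v_1v_2v_3v_4v_1$ with $k-4$ pendant vertices attached to $v_1$. Let $\Gamma=(K_n,Q(s,t)^-)$ and $\Gamma'=(K_n,Q_1^-)$. Then $\lambda_1(\Gamma)<\lambda_1(\Gamma')$.
   Context: For a subgraph $H$ of $K_n$, $(K_n,H^-)$ denotes the signed complete graph on $n$ vertices whose negative edges are exactly the edges of $H$ (all other edges positive); its adjacency matrix has entry $-1$ for negative edges, $+1$ for positive edges and $0$ on the diagonal. $\lambda_1(\Gamma)$ (the index) is the largest eigenvalue of the adjacency matrix. *)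

(* Defs.v *)
From HB Require Import structures.
From mathcomp Require Import all_boot all_order all_algebra.
From mathcomp Require Import boolp classical_sets reals.
Set Implicit Arguments. Unset Strict Implicit. Unset Printing Implicit Defensive.
Import Order.TTheory GRing.Theory Num.Theory.
Local Open Scope ring_scope.

(* A simple graph on vertex set {0,..,n-1} is given by an edge relation on nat
   (symmetric by construction below); vertices are 'I_n. *)

(* Adjacency matrix of the signed complete graph (K_n, H^-): entry -1 on edges
   of H, +1 on other off-diagonal pairs, 0 on the diagonal. *)
Definition signed_adj (R : pzRingType) (n : nat) (H : nat -> nat -> bool) : 'M[R]_n :=
  \matrix_(i < n, j < n)
    (if i == j then 0 else if H i j then -1 else 1).

(* Index: the largest eigenvalue (the set of eigenvalues is finite, and nonempty
   for symmetric real matrices of size >= 1, so the sup is a max). *)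
Definition lambda1 (R : realType) (n : nat) (A : 'M[R]_n) : R :=
  sup [set a : R | eigenvalue A a].

Definition sym_edge (E : nat -> nat -> bool) : nat -> nat -> bool :=
  fun i j => E i j || E j i.

(* Q(s,t): 4-cycle v1 v2 v3 v4 v1 labelled 0 1 2 3, s pendant vertices
   4,...,s+3 attached to v1 = 0, and t pendant vertices s+4,...,s+t+3
   attached to v2 = 1.  Vertices >= s+t+4 are isolated (not in H). *)
Definition Qst_base (s t : nat) (i j : nat) : bool :=
  [|| (i == 0%N) && (j == 1%N), (i == 1%N) && (j == 2%N),
      (i == 2%N) && (j == 3%N), (i == 3%N) && (j == 0%N),
      (i == 0%N) && (4 <= j < s + 4)%N
    | (i == 1%N) && (s + 4 <= j < s + t + 4)%N].
Definition Qst (s t : nat) := sym_edge (Qst_base s t).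

(* Q_1 on k vertices: 4-cycle 0 1 2 3 0 with k-4 pendant vertices 4,...,k-1
   attached to v1 = 0. *)
Definition Q1_base (k : nat) (i j : nat) : bool :=
  [|| (i == 0%N) && (j == 1%N), (i == 1%N) && (j == 2%N),
      (i == 2%N) && (j == 3%N), (i == 3%N) && (j == 0%N)
    | (i == 0%N) && (4 <= j < k)%N].
Definition Q1 (k : nat) := sym_edge (Q1_base k).

(* Main.v *)
Require Import Defs.
From HB Require Import structures.
From mathcomp Require Import all_boot all_order all_algebra.
From mathcomp Require Import boolp classical_sets reals.
From mathcomp Require Import zify ring lra.
From mathcomp Require polyrcf.
Import Order.TTheory GRing.Theory Num.Theory.
Local Open Scope ring_scope.
Set Implicit Arguments. Unset Strict Implicit. Unset Printing Implicit Defensive.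
Section Alg.
Variable R : realType.
Definition fexpr (s t m L : R) : R :=
  L^+7 - (s + t + m + 4%:R)  *  L^+6
  + (8%:R * s * t + 4%:R * s * m + 12%:R * s + 4%:R * t * m + 12%:R * t + 16%:R * m)  *  L^+4
  - (16%:R * s * t * m + 32%:R * s * t + 32%:R * s * m + 32%:R * t * m)  *  L^+2 + 64%:R * s * t * m.

Lemma alg_A (s t m L u w y z S X1 X2 X3 : R) :
  L * u - S + 2 * w + 2 * z + 2 * X1 = 0 ->
  L * w - S + 2 * u + 2 * y + 2 * X2 = 0 ->
  L * y - S + 2 * w + 2 * z = 0 ->
  L * z - S + 2 * y + 2 * u = 0 ->
  L * X1 - s * S + 2 * s * u = 0 ->
  L * X2 - t * S + 2 * t * w = 0 ->
  L * X3 - m * S = 0 ->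
  S - u - w - y - z - X1 - X2 - X3 = 0 ->
  fexpr s t m L != 0 ->
  [/\ u = 0, w = 0, y = 0, z = 0 & S = 0].
Proof.
set e0 := L * u - S + 2 * w + 2 * z + 2 * X1.
set e1 := L * w - S + 2 * u + 2 * y + 2 * X2.
set e2 := L * y - S + 2 * w + 2 * z.
set e3 := L * z - S + 2 * y + 2 * u.
set e4 := L * X1 - s * S + 2 * s * u.
set e5 := L * X2 - t * S + 2 * t * w.
set e6 := L * X3 - m * S.
set e7 := S - u - w - y - z - X1 - X2 - X3.
move=> H0 H1 H2 H3 H4 H5 H6 H7 hf.
have cu : fexpr s t m L  *  u = (L^+5 - L^+4 * s - L^+4 * t - L^+4 * m - 3%:R * L^+4 + 4%:R * L^+2 * s * t + 8%:R * L^+2 * s + 4%:R * L^+2 * t * m + 8%:R * L^+2 * t + 8%:R * L^+2 * m - 16%:R * s * t - 16%:R * t * m)  *  (L * e0 - 2 * e4) + (- L^+4 + 2%:R * L^+3 * m + 4%:R * L^+2 * s * t + 4%:R * L^+2 * s + 4%:R * L^+2 * t - 16%:R * s * t)  *  (L * e1 - 2 * e5) + (L^+5 - 2%:R * L^+4 * s - 4%:R * L^+3 * t - 8%:R * L^+3 * m + 16%:R * L * t * m)  *  e2 + (- L^+5 + 2%:R * L^+4 * t + 2%:R * L^+4 * m + 4%:R * L^+3 * s - 8%:R * L^+2 * t * m)  *  e3 + (L^+5 - 2%:R * L^+4 * s - 4%:R * L^+4 + 8%:R * L^+2 * s * t + 16%:R * L^+2 * s + 8%:R * L^+2 * t - 32%:R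 * s * t)  *  (L * e7 + e4 + e5 + e6).
  by rewrite /fexpr /e0 /e1 /e2 /e3 /e4 /e5 /e6 /e7; ring.
have cw : fexpr s t m L  *  w = (- L^+4 + 2%:R * L^+3 * m + 4%:R * L^+2 * s * t + 4%:R * L^+2 * s + 4%:R * L^+2 * t - 16%:R * s * t)  *  (L * e0 - 2 * e4) + (L^+5 - L^+4 * s - L^+4 * t - L^+4 * m - 3%:R * L^+4 + 4%:R * L^+2 * s * t + 4%:R * L^+2 * s * m + 8%:R * L^+2 * s + 8%:R * L^+2 * t + 8%:R * L^+2 * m - 16%:R * s * t - 16%:R * s * m)  *  (L * e1 - 2 * e5) + (- L^+5 + 2%:R * L^+4 * s + 2%:R * L^+4 * m + 4%:R * L^+3 * t - 8%:R * L^+2 * s * m)  *  e2 + (L^+5 - 2%:R * L^+4 * t - 4%:R * L^+3 * s - 8%:R * L^+3 * m + 16%:R * L * s * m)  *  e3 + (L^+5 - 2%:R * L^+4 * t - 4%:R * L^+4 + 8%:R * L^+2 * s * t + 8%:R * L^+2 * s + 16%:R * L^+2 * t - 32%:R * s * t)  *  (L * e7 + e4 + e5 + e6).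
  by rewrite /fexpr /e0 /e1 /e2 /e3 /e4 /e5 /e6 /e7; ring.
have cy : fexpr s t m L  *  y = (L^+4 - 2%:R * L^+3 * s - 4%:R * L^+2 * t - 8%:R * L^+2 * m + 16%:R * t * m)  *  (L * e0 - 2 * e4) + (- L^+4 + 2%:R * L^+3 * s + 2%:R * L^+3 * m + 4%:R * L^+2 * t - 8%:R * L * s * m)  *  (L * e1 - 2 * e5) + (L^+6 - L^+5 * s - L^+5 * t - L^+5 * m - 3%:R * L^+5 + 8%:R * L^+3 * s * t + 4%:R * L^+3 * s * m + 4%:R * L^+3 * t * m + 8%:R * L^+3 * t + 8%:R * L^+3 * m - 16%:R * L * s * t * m - 16%:R * L * t * m)  *  e2 + (- L^+5 + 2%:R * L^+4 * s + 2%:R * L^+4 * t + 2%:R * L^+4 * m - 16%:R * L^+2 * s * t - 8%:R * L^+2 * s * m - 8%:R * L^+2 * t * m + 32%:R * s * t * m)  *  e3 + (L^+5 - 4%:R * L^+4 - 4%:R * L^+3 * s + 8%:R * L^+2 * t)  *  (L * e7 + e4 + e5 + e6).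
  by rewrite /fexpr /e0 /e1 /e2 /e3 /e4 /e5 /e6 /e7; ring.
have cz : fexpr s t m L  *  z = (- L^+4 + 2%:R * L^+3 * t + 2%:R * L^+3 * m + 4%:R * L^+2 * s - 8%:R * L * t * m)  *  (L * e0 - 2 * e4) + (L^+4 - 2%:R * L^+3 * t - 4%:R * L^+2 * s - 8%:R * L^+2 * m + 16%:R * s * m)  *  (L * e1 - 2 * e5) + (- L^+5 + 2%:R * L^+4 * s + 2%:R * L^+4 * t + 2%:R * L^+4 * m - 16%:R * L^+2 * s * t - 8%:R * L^+2 * s * m - 8%:R * L^+2 * t * m + 32%:R * s * t * m)  *  e2 + (L^+6 - L^+5 * s - L^+5 * t - L^+5 * m - 3%:R * L^+5 + 8%:R * L^+3 * s * t + 4%:R * L^+3 * s * m + 8%:R * L^+3 * s + 4%:R * L^+3 * t * m + 8%:R * L^+3 * m - 16%:R * L * s * t * m - 16%:R * L * s * m)  *  e3 + (L^+5 - 4%:R * L^+4 - 4%:R * L^+3 * t + 8%:R * L^+2 * s)  *  (L * e7 + e4 + e5 + e6).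
  by rewrite /fexpr /e0 /e1 /e2 /e3 /e4 /e5 /e6 /e7; ring.
have cS : fexpr s t m L  *  S = (L^+5 - 2%:R * L^+4 * s - 4%:R * L^+4 + 8%:R * L^+2 * s * t + 16%:R * L^+2 * s + 8%:R * L^+2 * t - 32%:R * s * t)  *  (L * e0 - 2 * e4) + (L^+5 - 2%:R * L^+4 * t - 4%:R * L^+4 + 8%:R * L^+2 * s * t + 8%:R * L^+2 * s + 16%:R * L^+2 * t - 32%:R * s * t)  *  (L * e1 - 2 * e5) + (L^+6 - 4%:R * L^+5 - 4%:R * L^+4 * s + 8%:R * L^+3 * t)  *  e2 + (L^+6 - 4%:R * L^+5 - 4%:R * L^+4 * t + 8%:R * L^+3 * s)  *  e3 + (L^+6 - 4%:R * L^+4 * s - 4%:R * L^+4 * t - 16%:R * L^+4 + 16%:R * L^+2 * s * t + 32%:R * L^+2 * s + 32%:R * L^+2 * t - 64%:R * s * t)  *  (L * e7 + e4 + e5 + e6).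
  by rewrite /fexpr /e0 /e1 /e2 /e3 /e4 /e5 /e6 /e7; ring.
rewrite H0 H1 H2 H3 H4 H5 H6 H7 in cu cw cy cz cS.
have Z (v : R) : fexpr s t m L  *  v = 0 -> v = 0.
  by move/eqP; rewrite mulf_eq0 (negbTE hf) /= => /eqP.
split; apply: Z; [rewrite cu|rewrite cw|rewrite cy|rewrite cz|rewrite cS]; ring.
Qed.
Definition qexpr (p m L : R) : R :=
  L^+5 - (p + m + 4%:R) * L^+4 + 4%:R * (p * m + 3%:R * p + 4%:R * m) * L^+2
  - 32%:R * p * m.

Lemma f_q (s t m L : R) : fexpr s t m L =
  L^+2 * qexpr (s + t) m L + 8%:R * s * t * (L^+2 - 4%:R) * (L^+2 - 2%:R * m).
Proof. rewrite /fexpr /qexpr; ring. Qed.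

Lemma q_neg (s t m L : R) : 1 <= s -> 1 <= t -> 0 <= m -> m + 3%:R <= L ->
  fexpr s t m L = 0 -> qexpr (s + t) m L < 0.
Proof.
move=> hs ht hm hL; rewrite f_q => h.
have L2 : 0 < L^+2 by rewrite expr2; nra.
have A1 : 0 < L^+2 - 4%:R by rewrite expr2; nra.
have A2 : 0 < L^+2 - 2%:R * m by rewrite expr2; nra.
have A3 : 0 < 8%:R * s * t * (L^+2 - 4%:R) * (L^+2 - 2%:R * m).
  by rewrite !mulr_gt0 //; lra.
have : L^+2 * qexpr (s + t) m L < 0 by lra.
by rewrite pmulr_rlt0.
Qed.

Lemma q_c (p m : R) : 2%:R <= p -> 0 <= m -> qexpr p m (p + m + 1) <= 0.
Proof.
move=> hp hm.
have E : 3%:R * qexpr p m (p + m + 1) = - ((p + m + 1)^+2 * ((3%:R * m + p - 5%:R)^+2 + 8%:R * (p - 2%:R) * (p + 1))) - 96%:R * p * m.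
  rewrite /qexpr; ring.
have h1 : 0 <= (p + m + 1)^+2 * ((3%:R * m + p - 5%:R)^+2 + 8%:R * (p - 2%:R) * (p + 1)).
  apply: mulr_ge0; first exact: sqr_ge0.
  apply: addr_ge0; first exact: sqr_ge0.
  apply: mulr_ge0; lra.
have h2 : 0 <= 96%:R * p * m by apply: mulr_ge0; lra.
lra.
Qed.

Lemma q_big (p m x : R) : 2%:R <= p -> 0 <= m ->
  p + m + 4%:R + 4%:R * (p * m + 3%:R * p + 4%:R * m) <= x -> 0 < qexpr p m x.
Proof.
move=> hp hm hx.
set X := p * m + 3%:R * p + 4%:R * m.
have hpm : 0 <= p * m by nra.
have hX : 6%:R + p * m <= X by rewrite /X; lra.
have hx2 : 2%:R <= x by lra.
have x4 : 16%:R <= x^+4.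
  have : 4%:R <= x^+2 by rewrite expr2; nra.
  move=> h; rewrite (_ : x^+4 = x^+2 * x^+2); last by rewrite -exprD.
  nra.
have x2 : 0 <= x^+2 by exact: sqr_ge0.
rewrite /qexpr -/X.
have h1 : 4%:R * X <= x - (p + m + 4%:R) by rewrite /X; lra.
have h2 : x^+4 * (4%:R * X) <= x^+4 * (x - (p + m + 4%:R)) by apply: ler_wpM2l; lra.
have h3 : 0 <= 4%:R * X * x^+2 by apply: mulr_ge0; lra.
have h4 : 32%:R * p * m < 4%:R * X * x^+4 by nra.
have -> : x^+5 = x^+4 * x by rewrite exprSr.
nra.
Qed.

Lemma b_pos (p L : R) : 2%:R <= p -> 3%:R <= L -> 0 < L^+3 - 4%:R * L^+2 + 8%:R * p.
Proof.
move=> hp hL.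
have -> : L^+3 - 4%:R * L^+2 + 8%:R * p = (L - 3%:R) * (L^+2 - L - 3%:R) + (8%:R * p - 9%:R) by ring.
have h1 : 0 <= L - 3%:R by lra.
have h2 : 0 <= L^+2 - L - 3%:R by rewrite expr2; nra.
have := mulr_ge0 h1 h2; lra.
Qed.
End Alg.
Section Main.
Variable R : realType.
Lemma signed_adj_mul n (H : nat -> nat -> bool) (v : 'rV[R]_n) (i : 'I_n) :
  H i i = false ->
  (v *m signed_adj R n H) 0 i =
  \sum_(j < n) v 0 j - v 0 i - 2 * \sum_(j < n) (if H j i then v 0 j else 0).
Proof.
move=> Hii; rewrite !mxE.
have -> : \sum_(j < n) v 0 j * signed_adj R n H j i =
   \sum_(j < n) (v 0 j - (if j == i then v 0 j else 0) - 2 * (if H j i then v 0 j else 0)).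
  apply: eq_bigr => j _; rewrite !mxE.
  case: eqP => [->|_]; first by rewrite Hii; ring.
  by case: (H j i); ring.
rewrite !big_split /= !sumrN mulr_sumr.
rewrite -big_mkcond /= big_pred1_eq; ring.
Qed.
Lemma split7 (N s t : nat) (G : nat -> R) : (s + t + 4 <= N)%N ->
  \sum_(0 <= j < N) G j = G 0%N + G 1%N + G 2%N + G 3%N + \sum_(4 <= j < s+4) G j
    + \sum_(s+4 <= j < s+t+4) G j + \sum_(s+t+4 <= j < N) G j.
Proof.
move=> hN.
rewrite (@big_cat_nat _ _ _ 4 0 N) //; last by apply: leq_trans hN; rewrite leq_addl.
rewrite (@big_cat_nat _ _ _ (s+4) 4 N) //; first last.
- by apply: leq_trans hN; rewrite -addnA leq_add2l leq_addl.
- by rewrite leq_addl.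
rewrite (@big_cat_nat _ _ _ (s+t+4) (s+4) N) //; last by rewrite addnAC leq_addr.
rewrite (big_ltn (isT : (0 < 4)%N)) (big_ltn (isT : (1 < 4)%N)).
rewrite (big_ltn (isT : (2 < 4)%N)) (big_ltn (isT : (3 < 4)%N)) big_geq //.
rewrite /= addr0 !addrA. done. Qed.

Lemma QstE (s t i j : nat) : Qst s t j i =
  [|| (j == 0%N) && (i == 1%N), (j == 1%N) && (i == 2%N),
      (j == 2%N) && (i == 3%N), (j == 3%N) && (i == 0%N),
      (j == 0%N) && (4 <= i < s + 4)%N, (j == 1%N) && (s + 4 <= i < s + t + 4)%N,
      (i == 0%N) && (j == 1%N), (i == 1%N) && (j == 2%N),
      (i == 2%N) && (j == 3%N), (i == 3%N) && (j == 0%N),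
      (i == 0%N) && (4 <= j < s + 4)%N
    | (i == 1%N) && (s + 4 <= j < s + t + 4)%N].
Proof. by rewrite /Qst /sym_edge /Qst_base -!orbA. Qed.

Lemma Qst0 s t i : Qst s t 0 i = [|| i == 1%N, i == 3%N | (4 <= i < s + 4)%N].
Proof. rewrite QstE /=. lia. Qed.
Lemma Qst1 s t i : Qst s t 1 i = [|| i == 0%N, i == 2%N | (s + 4 <= i < s + t + 4)%N].
Proof. rewrite QstE /=. lia. Qed.
Lemma Qst2 s t i : Qst s t 2 i = (i == 1%N) || (i == 3%N).
Proof. rewrite QstE /=. lia. Qed.
Lemma Qst3 s t i : Qst s t 3 i = (i == 2%N) || (i == 0%N).
Proof. rewrite QstE /=. lia. Qed.
Lemma QstR1 s t i j : (4 <= j < s + 4)%N -> Qst s t j i = (i == 0%N).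
Proof.
move=> h; rewrite QstE.
have -> : (j == 0%N) = false by lia.
have -> : (j == 1%N) = false by lia.
have -> : (j == 2%N) = false by lia.
have -> : (j == 3%N) = false by lia.
have -> : (s + 4 <= j < s + t + 4)%N = false by lia.
by rewrite ?h; lia.
Qed.
Lemma QstR2 s t i j : (s + 4 <= j < s + t + 4)%N -> Qst s t j i = (i == 1%N).
Proof.
move=> h; rewrite QstE.
have -> : (j == 0%N) = false by lia.
have -> : (j == 1%N) = false by lia.
have -> : (j == 2%N) = false by lia.
have -> : (j == 3%N) = false by lia.
have -> : (4 <= j < s + 4)%N = false by lia.
by rewrite ?h; lia.
Qed.
Lemma QstR3 s t i j : (s + t + 4 <= j)%N -> Qst s t j i = false.
Proof.
move=> h; rewrite QstE.
have -> : (j == 0%N) = false by lia.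
have -> : (j == 1%N) = false by lia.
have -> : (j == 2%N) = false by lia.
have -> : (j == 3%N) = false by lia.
have -> : (4 <= j < s + 4)%N = false by lia.
have -> : (s + 4 <= j < s + t + 4)%N = false by lia.
lia.
Qed.
Lemma Qst_irr s t i : Qst s t i i = false.
Proof. rewrite QstE. lia. Qed.

Lemma sum_if (c : bool) (a b : nat) (F : nat -> R) :
  \sum_(a <= j < b) (if c then F j else 0) = if c then \sum_(a <= j < b) F j else 0.
Proof. by case: c => //; rewrite big1. Qed.

Lemma nbr (N s t : nat) (F : nat -> R) (i : nat) : (s + t + 4 <= N)%N ->
  \sum_(0 <= j < N) (if Qst s t j i then F j else 0) =
  (if Qst s t 0 i then F 0%N else 0) + (if Qst s t 1 i then F 1%N else 0)
  + (if Qst s t 2 i then F 2%N else 0) + (if Qst s t 3 i then F 3%N else 0)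
  + (if i == 0%N then \sum_(4 <= j < s + 4) F j else 0)
  + (if i == 1%N then \sum_(s + 4 <= j < s + t + 4) F j else 0).
Proof.
move=> hN; rewrite (@split7 N s t) //.
rewrite (@eq_big_nat _ _ _ 4 (s+4) _ (fun j => if i == 0%N then F j else 0)); last first.
  by move=> j hj; rewrite QstR1.
rewrite (@eq_big_nat _ _ _ (s+4) (s+t+4) _ (fun j => if i == 1%N then F j else 0)); last first.
  by move=> j hj; rewrite QstR2.
rewrite (@eq_big_nat _ _ _ (s+t+4) N _ (fun j => 0)); last first.
  by move=> j hj; rewrite QstR3 //; case/andP: hj.
rewrite !sum_if big1_eq addr0. done.
Qed.

Lemma mul_eq n (H : nat -> nat -> bool) (v : 'rV[R]_n) (F : nat -> R) :
  (forall i : 'I_n, v 0 i = F i) -> (forall i, H i i = false) ->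
  forall i : 'I_n, (v *m signed_adj R n H) 0 i =
    \sum_(0 <= j < n) F j - F i - 2 * \sum_(0 <= j < n) (if H j i then F j else 0).
Proof.
move=> hF hH i; rewrite signed_adj_mul // -hF !big_mkord.
congr (_ - _ - 2 * _); apply: eq_bigr => j _; by rewrite hF.
Qed.

Section Nbr.
Variables (N s t : nat) (F : nat -> R).
Hypothesis hN : (s + t + 4 <= N)%N.
Let G i := \sum_(0 <= j < N) (if Qst s t j i then F j else 0).
Lemma nbr_u : G 0 = F 1%N + F 3%N + \sum_(4 <= j < s + 4) F j.
Proof. rewrite /G nbr // Qst0 Qst1 Qst2 Qst3.
have l1 (c : nat) : (c < 4)%N -> (s + 4 <= c < s + t + 4)%N = false by move=> hc; lia.
by rewrite ?(l1 1%N) ?(l1 2%N) ?(l1 3%N) //= !(add0r, addr0). Qed.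
Lemma nbr_w : G 1 = F 0%N + F 2%N + \sum_(s + 4 <= j < s + t + 4) F j.
Proof. rewrite /G nbr // Qst0 Qst1 Qst2 Qst3.
have l1 (c : nat) : (c < 4)%N -> (s + 4 <= c < s + t + 4)%N = false by move=> hc; lia.
by rewrite ?(l1 1%N) ?(l1 2%N) ?(l1 3%N) //= !(add0r, addr0). Qed.
Lemma nbr_y : G 2 = F 1%N + F 3%N.
Proof. rewrite /G nbr // Qst0 Qst1 Qst2 Qst3.
have l1 (c : nat) : (c < 4)%N -> (s + 4 <= c < s + t + 4)%N = false by move=> hc; lia.
by rewrite ?(l1 1%N) ?(l1 2%N) ?(l1 3%N) //= !(add0r, addr0). Qed.
Lemma nbr_z : G 3 = F 0%N + F 2%N.
Proof. rewrite /G nbr // Qst0 Qst1 Qst2 Qst3.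
have l1 (c : nat) : (c < 4)%N -> (s + 4 <= c < s + t + 4)%N = false by move=> hc; lia.
by rewrite ?(l1 1%N) ?(l1 2%N) ?(l1 3%N) //= !(add0r, addr0). Qed.
Lemma nbr_p1 i : (4 <= i < s + 4)%N -> G i = F 0%N.
Proof.
move=> h; rewrite /G nbr // Qst0 Qst1 Qst2 Qst3.
have -> : [|| i == 1%N, i == 3%N | (4 <= i < s + 4)%N] by lia.
have -> : [|| i == 0%N, i == 2%N | (s + 4 <= i < s + t + 4)%N] = false by lia.
have -> : (i == 1%N) || (i == 3%N) = false by lia.
have -> : (i == 2%N) || (i == 0%N) = false by lia.
have -> : (i == 0%N) = false by lia.
have -> : (i == 1%N) = false by lia.
by rewrite /= !(add0r, addr0).
Qed.
Lemma nbr_p2 i : (s + 4 <= i < s + t + 4)%N -> G i = F 1%N.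
Proof.
move=> h; rewrite /G nbr // Qst0 Qst1 Qst2 Qst3.
have -> : [|| i == 1%N, i == 3%N | (4 <= i < s + 4)%N] = false by lia.
have -> : [|| i == 0%N, i == 2%N | (s + 4 <= i < s + t + 4)%N] by lia.
have -> : (i == 1%N) || (i == 3%N) = false by lia.
have -> : (i == 2%N) || (i == 0%N) = false by lia.
have -> : (i == 0%N) = false by lia.
have -> : (i == 1%N) = false by lia.
by rewrite /= !(add0r, addr0).
Qed.
Lemma nbr_o i : (s + t + 4 <= i)%N -> G i = 0.
Proof.
move=> h; rewrite /G nbr // Qst0 Qst1 Qst2 Qst3.
have -> : [|| i == 1%N, i == 3%N | (4 <= i < s + 4)%N] = false by lia.
have -> : [|| i == 0%N, i == 2%N | (s + 4 <= i < s + t + 4)%N] = false by lia.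
have -> : (i == 1%N) || (i == 3%N) = false by lia.
have -> : (i == 2%N) || (i == 0%N) = false by lia.
have -> : (i == 0%N) = false by lia.
have -> : (i == 1%N) = false by lia.
by rewrite /= !(add0r, addr0).
Qed.
End Nbr.

Lemma A_side n' s t (a : R) : (s + t + 4 <= n'.+1)%N ->
  eigenvalue (signed_adj R n'.+1 (Qst s t)) a -> a + 1 != 0 ->
  fexpr s%:R t%:R (n'.+1 - (s + t + 4))%N%:R (a + 1) = 0.
Proof.
move=> hN /eigenvalueP [v Hv nz] hL.
set m := (n'.+1 - (s + t + 4))%N.
pose F := fun j : nat => v 0 (inord j : 'I_n'.+1).
have hF : forall i : 'I_n'.+1, v 0 i = F i by move=> i; rewrite /F inord_val.
set L := a + 1.
set S := \sum_(0 <= j < n'.+1) F j.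
pose G i := \sum_(0 <= j < n'.+1) (if Qst s t j i then F j else 0).
have E : forall i, (i < n'.+1)%N -> L * F i = S - 2 * G i.
  move=> i hi.
  have := congr1 (fun M : 'M[R]_(1, n'.+1) => M 0 (Ordinal hi)) Hv.
  rewrite (mul_eq hF (@Qst_irr s t) (Ordinal hi)) mxE hF /= -/S => h.
  by rewrite /L mulrDl mul1r -h /G; ring.
set X1 := \sum_(4 <= j < s + 4) F j.
set X2 := \sum_(s + 4 <= j < s + t + 4) F j.
set X3 := \sum_(s + t + 4 <= j < n'.+1) F j.
have lt0 : (0 < n'.+1)%N by [].
have lt1 : (1 < n'.+1)%N by lia.
have lt2 : (2 < n'.+1)%N by lia.
have lt3 : (3 < n'.+1)%N by lia.
have Eu := E 0%N lt0; rewrite /G (nbr_u F hN) -/X1 in Eu.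
have Ew := E 1%N lt1; rewrite /G (nbr_w F hN) -/X2 in Ew.
have Ey := E 2%N lt2; rewrite /G (nbr_y F hN) in Ey.
have Ez := E 3%N lt3; rewrite /G (nbr_z F hN) in Ez.
have Ep1 : forall j, (4 <= j < s + 4)%N -> L * F j = S - 2 * F 0%N.
  move=> j hj; rewrite E; last by lia.
  by rewrite /G (nbr_p1 F hN hj).
have Ep2 : forall j, (s + 4 <= j < s + t + 4)%N -> L * F j = S - 2 * F 1%N.
  move=> j hj; rewrite E; last by lia.
  by rewrite /G (nbr_p2 F hN hj).
have Eo : forall j, (s + t + 4 <= j < n'.+1)%N -> L * F j = S.
  move=> j hj; rewrite E; last by lia.
  by rewrite /G (nbr_o F hN (i := j)) ?mulr0 ?subr0 //; case/andP: hj.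
have HX1 : L * X1 = s%:R * (S - 2 * F 0%N).
  rewrite /X1 mulr_sumr (eq_big_nat _ _ Ep1) sumr_const_nat.
  have -> : (s + 4 - 4)%N = s by lia.
  by rewrite (mulr_natl (S - 2 * F 0%N) s).
have HX2 : L * X2 = t%:R * (S - 2 * F 1%N).
  rewrite /X2 mulr_sumr (eq_big_nat _ _ Ep2) sumr_const_nat.
  have -> : (s + t + 4 - (s + 4))%N = t by lia.
  by rewrite (mulr_natl (S - 2 * F 1%N) t).
have HX3 : L * X3 = m%:R * S.
  rewrite /X3 mulr_sumr (eq_big_nat _ _ Eo) sumr_const_nat.
  by rewrite (mulr_natl S m).
have HS : S = F 0%N + F 1%N + F 2%N + F 3%N + X1 + X2 + X3 by rewrite /S (@split7 _ s t).
case: (eqVneq (fexpr s%:R t%:R m%:R L) 0) => // hf.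
have [u0 w0 y0 z0 S0] := @alg_A R s%:R t%:R m%:R L (F 0%N) (F 1%N) (F 2%N) (F 3%N) S X1 X2 X3
  ltac:(rewrite Eu; ring) ltac:(rewrite Ew; ring) ltac:(rewrite Ey; ring) ltac:(rewrite Ez; ring)
  ltac:(rewrite HX1; ring) ltac:(rewrite HX2; ring) ltac:(rewrite HX3; ring)
  ltac:(rewrite {1}HS; ring) hf.
exfalso; move/eqP: nz; apply; apply/rowP => i; rewrite mxE hF.
have Lz (x : R) : L * x = 0 -> x = 0.
  by move/eqP; rewrite mulf_eq0 (negbTE hL) /= => /eqP.
have hi := ltn_ord i.
case: (ltnP i 4) => h4.
  by case: (nat_of_ord i) h4 => [|[|[|[|k]]]] //.
case: (ltnP i (s + 4)) => h5.
  by apply: Lz; rewrite Ep1 ?u0 ?S0 ?h4 ?h5; [ring | lia].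
case: (ltnP i (s + t + 4)) => h6.
  by apply: Lz; rewrite Ep2 ?w0 ?S0; [ring | lia].
by apply: Lz; rewrite Eo ?S0 //; lia.
Qed.

Lemma B_side N p (r : R) : (p + 4 <= N)%N -> (2 <= p)%N ->
  qexpr p%:R (N - (p + 4))%N%:R r = 0 -> 3%:R <= r ->
  eigenvalue (signed_adj R N (Qst p 0)) (r - 1).
Proof.
move=> hN hp hq hr.
set m := (N - (p + 4))%N.
have hN' : (p + 0 + 4 <= N)%N by rewrite addn0.
have hL : r != 0 by apply/eqP => h; rewrite h in hr; lra.
set P := (p%:R : R).
have hP : 2%:R <= P by rewrite /P ler_nat.
set hv := r^+3 - 2%:R * P * r^+2 - 4%:R * r^+2 + 16%:R * P.
set bv := r^+3 - 4%:R * r^+2 + 8%:R * P.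
set cv := r^+3 - 4%:R * r^+2 - 4%:R * P * r.
set Sv := r^+4 - 4%:R * P * r^+2 - 16%:R * r^+2 + 32%:R * P.
set Pv := (Sv - 2 * hv) / r.
set Ov := Sv / r.
pose F := fun j : nat => if j == 0%N then hv else if j == 2%N then cv
  else if (j == 1%N) || (j == 3%N) then bv else if (j < p + 4)%N then Pv else Ov.
pose v := \row_(j < N) F j.
have hF : forall i : 'I_N, v 0 i = F i by move=> i; rewrite mxE.
have Fp : forall j, (4 <= j < p + 4)%N -> F j = Pv.
  move=> j hj; rewrite /F.
  have -> : (j == 0%N) = false by lia.
  have -> : (j == 2%N) = false by lia.
  have -> : (j == 1%N) || (j == 3%N) = false by lia.
  by have -> : (j < p + 4)%N by lia.
have Fo : forall j, (p + 4 <= j)%N -> F j = Ov.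
  move=> j hj; rewrite /F.
  have -> : (j == 0%N) = false by lia.
  have -> : (j == 2%N) = false by lia.
  have -> : (j == 1%N) || (j == 3%N) = false by lia.
  by have -> : (j < p + 4)%N = false by lia.
have F0 : F 0%N = hv by [].
have F1 : F 1%N = bv by [].
have F2 : F 2%N = cv by [].
have F3 : F 3%N = bv by [].
have X1 : \sum_(4 <= j < p + 4) F j = P * Pv.
  rewrite (eq_big_nat _ _ Fp) sumr_const_nat.
  have -> : (p + 4 - 4)%N = p by lia.
  by rewrite (mulr_natl Pv p).
have X2 : \sum_(p + 4 <= j < p + 0 + 4) F j = 0 by rewrite addn0 big_geq.
have X3 : \sum_(p + 0 + 4 <= j < N) F j = m%:R * Ov.
  rewrite addn0 (eq_big_nat _ _ (F2 := fun _ => Ov)); last by move=> j /andP[hj _]; apply: Fo.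
  by rewrite sumr_const_nat (mulr_natl Ov m).
have HS : \sum_(0 <= j < N) F j = Sv.
  rewrite (@split7 _ p 0) // X2 X3 X1 /=.
  rewrite F0 F1 F2 F3.
  apply/eqP; rewrite -subr_eq0; apply/eqP.
  have -> : hv + bv + cv + bv + P * Pv + 0 + m%:R * Ov - Sv = - qexpr P m%:R r / r.
    rewrite /Pv /Ov /hv /bv /cv /Sv /qexpr; field; exact: hL.
  by rewrite /P hq oppr0 mul0r.
apply/eigenvalueP; exists v; last first.
  have lt1 : (1 < N)%N by lia.
  apply/eqP => /rowP /(_ (Ordinal lt1)); rewrite !mxE /= => hb.
  have := b_pos hP hr; rewrite -/bv.
  have -> : bv = 0 by rewrite -hb.
  by rewrite ltxx.
apply/rowP => i; rewrite (mul_eq hF (@Qst_irr p 0) i) !mxE HS.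
suff : r * F i = Sv - 2 * (\sum_(0 <= j < N) (if Qst p 0 j i then F j else 0)).
  move=> h; rewrite mulrBl mul1r h; ring.
have hi := ltn_ord i.
case: (ltnP i 4) => h4.
  case: (nat_of_ord i) h4 => [|[|[|[|k]]]] // _.
  - rewrite (nbr_u F hN') X1 F0 F1 F3 /Pv /hv /bv /Sv; field; exact: hL.
  - rewrite (nbr_w F hN') X2 F0 F1 F2 /hv /bv /cv /Sv; ring.
  - rewrite (nbr_y F hN') F1 F2 F3 /hv /bv /cv /Sv; ring.
  - rewrite (nbr_z F hN') F0 F2 F3 /hv /bv /cv /Sv; ring.
case: (ltnP i (p + 4)) => h5.
  have hj : (4 <= i < p + 4)%N by lia.
  rewrite (nbr_p1 F hN' hj) (Fp _ hj) F0 /Pv; field; exact: hL.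
have hj : (p + 0 + 4 <= i)%N by lia.
have hj' : (p + 4 <= i)%N by lia.
rewrite (nbr_o F hN' hj) (Fo _ hj') /Ov; field; exact: hL.
Qed.

Lemma eig_fin n (M : 'M[R]_n) : exists l : seq R, forall a, eigenvalue M a -> a \in l.
Proof.
exists (polyrcf.rootsR (char_poly M)) => a; rewrite eigenvalue_root_char => ha.
have nz : char_poly M != 0 := monic_neq0 (char_poly_monic M).
have := polyrcf.roots_onP (polyrcf.roots_on_rootsR nz) => h.
by have := h a; rewrite in_itv /= ha => /(_ isT) <-.
Qed.

Lemma max_list (l : seq R) (P : R -> Prop) :
  (exists a, P a /\ a \in l) ->
  exists b, P b /\ forall a, P a -> a \in l -> a <= b.
Proof.
elim: l => [[a [_]]//|x l IH] hex.
case: (pselect (exists a, P a /\ a \in l)) => [/IH [b [Pb hb]]|hn].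
  case: (pselect (P x)) => Px.
    case: (lerP x b) => hxb.
      exists b; split => // a Pa; rewrite in_cons => /orP[/eqP->//|]; exact: hb.
    exists x; split => // a Pa; rewrite in_cons => /orP[/eqP->//|/(hb _ Pa) h].
    by apply: le_trans h (ltW hxb).
  exists b; split => // a Pa; rewrite in_cons => /orP[/eqP ax|]; last exact: hb.
  by rewrite ax in Pa.
have Px : P x.
  case: hex => a [Pa]; rewrite in_cons => /orP[/eqP <-//|al].
  by exfalso; apply: hn; exists a.
exists x; split => // a Pa; rewrite in_cons => /orP[/eqP->//|al].
by exfalso; apply: hn; exists a.
Qed.

Definition qpoly (P M : R) : {poly R} :=
  'X^5 - (P + M + 4%:R) *: 'X^4 + (4%:R * (P * M + 3%:R * P + 4%:R * M)) *: 'X^2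
  - (32%:R * P * M)%:P.

Lemma qpolyE P M x : (qpoly P M).[x] = qexpr P M x.
Proof. rewrite /qpoly /qexpr !hornerE; ring. Qed.

Lemma q_root (P M L : R) : 2%:R <= P -> 0 <= M -> qexpr P M L <= 0 ->
  exists r, L <= r /\ qexpr P M r = 0.
Proof.
move=> hP hM hL.
set B := P + M + 4%:R + 4%:R * (P * M + 3%:R * P + 4%:R * M).
have hB := q_big hP hM (lexx B).
have LB : L <= B.
  case: (lerP L B) => // h; have := q_big hP hM (ltW h); lra.
have [r hr rr] := @polyrcf.poly_ivt _ (qpoly P M) L B LB
  ltac:(rewrite !qpolyE; apply: mulr_le0_ge0 => //; exact: ltW).
exists r; split; first by move: hr; rewrite in_itv => /andP[].
by move/eqP: rr; rewrite qpolyE.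
Qed.
End Main.

Lemma Q1_eq s t : Q1 (s + t + 4) = Qst (s + t) 0.
Proof.
rewrite /Q1 /Qst; congr sym_edge; apply/funext => i; apply/funext => j.
rewrite /Q1_base /Qst_base addn0.
have -> : (s + t + 4 <= j < s + t + 4)%N = false by lia.
by rewrite andbF !orbF.
Qed.

Unset Implicit Arguments.
Theorem corollary3p4 (R : realType) (s t n : nat) :
  (1 <= s)%N -> (1 <= t)%N -> (s + t + 4 <= n)%N ->
  lambda1 (signed_adj R n (Qst s t)) < lambda1 (signed_adj R n (Q1 (s + t + 4))).
Proof.
move=> hs ht hn.
rewrite Q1_eq.
case: n hn => [|n'] hn; first by lia.
set m := (n'.+1 - (s + t + 4))%N.
set E := [set a : R | eigenvalue (signed_adj R n'.+1 (Qst s t)) a]%classic.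
set E' := [set a : R | eigenvalue (signed_adj R n'.+1 (Qst (s + t) 0)) a]%classic.
rewrite /lambda1 -/E -/E'.
set P : R := (s + t)%:R.
set M : R := m%:R.
have hP : 2%:R <= P by rewrite /P ler_nat; lia.
have hM : 0 <= M by rewrite /M ler0n.
have Er : forall r, qexpr P M r = 0 -> 3%:R <= r -> E' (r - 1).
  move=> r hq hr; rewrite /E' /=.
  by apply: (@B_side R n'.+1 (s + t) r hn) => //; lia.
have [r0 [hr0 qr0]] := q_root hP hM (q_c hP hM).
have r03 : 3%:R <= r0 by lra.
have E'r0 := Er r0 qr0 r03.
have [l' hl'] := eig_fin (signed_adj R n'.+1 (Qst (s + t) 0)).
have [b' [_ hb']] := @max_list R l' E' (ex_intro _ _ (conj E'r0 (hl' _ E'r0))).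
have hsup : has_sup E'.
  split; first by exists (r0 - 1).
  by exists b' => a Ea; apply: hb' => //; exact: hl'.
have supE' : forall a, E' a -> a <= sup E' by move=> a Ea; exact: sup_upper_bound.
have r0E' := supE' _ E'r0.
case: (pselect (exists a, E a)) => [hne|hne]; last first.
  have -> : E = set0.
    by apply/seteqP; split => x // Ex; exfalso; apply: hne; exists x.
  rewrite sup0; lra.
have [l hl] := eig_fin (signed_adj R n'.+1 (Qst s t)).
have [b [Eb hb]] : exists b, E b /\ forall a, E a -> a \in l -> a <= b.
  case: hne => a Ea; apply: max_list; exists a; split => //; exact: hl.
have supE : sup E <= b.
  apply: ge_sup; first by exists b.
  by move=> a Ea; apply: hb => //; exact: hl.
case: (ltrP (b + 1) (P + M + 1)) => hb1; first by lra.
have hb0 : b + 1 != 0 by apply/eqP => h; move: hb1 hP hM; rewrite h; clear; lra.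
have hf := @A_side R n' s t b hn Eb hb0.
have hs' : 1 <= (s%:R : R) by rewrite ler1n.
have ht' : 1 <= (t%:R : R) by rewrite ler1n.
have hMb : M + 3%:R <= b + 1 by move: hb1 hP; clear; lra.
have hq := q_neg hs' ht' hM hMb hf.
rewrite -natrD -/P in hq.
have [r [hr qr]] := q_root hP hM (ltW hq).
have hrb : b + 1 < r.
  rewrite lt_neqAle hr andbT; apply/eqP => h; rewrite -h in qr.
  by move: hq; rewrite qr ltxx.
have hr3 : 3%:R <= r by move: hrb hb1 hP hM; clear; lra.
have := supE' _ (Er r qr hr3); move: hrb supE; clear; lra.
Qed.
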